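(* Every cyclic $\mathrm{STS}(v)$ with $v>7$ admits a zero-sum $4$-flow.
   Context: A Steiner triple system $\mathrm{STS}(v)$ is a pair $(X,\mathcal{B})$ with $|X|=v$ and $\mathcal{B}$ a collection of 3-subsets of $X$ such that every 2-subset lies in exactly one block. It is cyclic if it has an automorphism (a permutation of $X$ mapping blocks to blocks) that is a single cycle of length $v$. For integer $n\ge2$, a zero-sum $n$-flow is a map $f:\mathcal{B}\to\{\pm1,\ldots,\pm(n-1)\}$ with $\sum_{B\ni x} f(B)=0$ for every point $x$. *)

(* Defs.v *)
From mathcomp Require Import all_boot all_order all_algebra all_fingroup.
Set Implicit Arguments. Unset Strict Implicit. Unset Printing Implicit Defensive.
Import GRing.Theory Num.Theory.

Definition is_STS (T : finType) (B : {set {set T}}) : Prop :=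
  (forall b, b \in B -> #|b| = 3) /\
  (forall p : {set T}, #|p| = 2 -> exists! b, b \in B /\ p \subset b).

Definition is_automorphism (T : finType) (B : {set {set T}}) (s : {perm T}) : Prop :=
  forall b, b \in B -> s @: b \in B.

Definition is_full_cycle (T : finType) (s : {perm T}) : Prop :=
  exists x : T, #|porbit s x| = #|T|.

Definition is_cyclic_STS (T : finType) (B : {set {set T}}) : Prop :=
  is_STS B /\ exists s : {perm T}, is_automorphism B s /\ is_full_cycle s.

Definition zero_sum_flow (T : finType) (B : {set {set T}}) (n : nat)
    (f : {set T} -> int) : Prop :=
  (forall b, b \in B -> f b != 0 /\ (`|f b| <= (n.-1)%:Z)%R) /\
  (forall x : T, (\sum_(b in B | x \in b) f b)%R = 0%R).

Definition admits_zero_sum_flow (T : finType) (B : {set {set T}}) (n : nat) : Prop :=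
  exists f : {set T} -> int, zero_sum_flow B n f.

(* Main.v *)
Require Import Defs.
From mathcomp Require Import all_boot all_order all_algebra all_fingroup.
Set Implicit Arguments. Unset Strict Implicit. Unset Printing Implicit Defensive.
Import GRing.Theory Num.Theory.
From mathcomp Require Import zify.

Definition vals : seq int := [:: 1; -1; 2; -2; 3; -3]%R.

Lemma vals_ok a : a \in vals -> a != 0 /\ (`|a| <= 3)%R.
Proof.
have H : all (fun a : int => (a != 0) && (`|a| <= 3)%R) vals by [].
by move=> /(allP H) /andP[].
Qed.

Lemma triple (w1 w2 w3 : nat) : 0 < w1 <= 3 -> 0 < w2 <= 3 -> 0 < w3 <= 3 ->
  exists a1 a2 a3 : int, [/\ a1 \in vals, a2 \in vals, a3 \in vals &
     (a1 *+ w1 + a2 *+ w2 + a3 *+ w3 = 0)%R].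
Proof.
have H : all (fun w1 => all (fun w2 => all (fun w3 =>
   has (fun a1 : int => has (fun a2 : int => has (fun a3 : int =>
     (a1 *+ w1 + a2 *+ w2 + a3 *+ w3 == 0)%R) vals) vals) vals)
   [:: 1; 2; 3]) [:: 1; 2; 3]) [:: 1; 2; 3] by vm_compute.
have mem w : 0 < w <= 3 -> w \in [:: 1; 2; 3].
  by case: w => [|[|[|[|w]]]].
move=> /mem h1 /mem h2 /mem h3.
move: (allP H _ h1) => /allP /(_ _ h2) /allP /(_ _ h3) /hasP [a1 m1].
move=> /hasP [a2 m2] /hasP [a3 m3] /eqP E.
by exists a1, a2, a3.
Qed.

Lemma swap2 (x y : nat) : ((x%:Z *+ y) + - (y%:Z *+ x) = 0)%R.
Proof. by rewrite -[Posz x]natz -[Posz y]natz -!mulrnA mulnC subrr. Qed.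

Lemma vals_exist (X : eqType) (s : seq X) (w : X -> nat) :
  uniq s -> 1 < size s -> (forall x, x \in s -> 0 < w x <= 3) ->
  exists g : X -> int, (forall x, x \in s -> g x \in vals) /\
     (\sum_(x <- s) g x *+ w x = 0)%R.
Proof.
have [n] := ubnP (size s); elim: n s => // n IH [|a [|b [|c rest]]] //= Hn.
- move=> U _ Hw. have ab : a != b by move: U; rewrite /= inE andbT.
  have Ha := Hw a (mem_head _ _). have Hb : 0 < w b <= 3 by apply: Hw; rewrite !inE eqxx orbT.
  have ba : (b == a) = false by rewrite eq_sym (negbTE ab).
  exists (fun x => if x == a then (w b)%:Z else - (w a)%:Z)%R; split.
    move=> x; rewrite !inE => /orP[/eqP->|/eqP->]; rewrite ?eqxx ?ba.
      by case: (w b) Hb => [|[|[|[|]]]].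
    by case: (w a) Ha => [|[|[|[|]]]].
  rewrite !big_cons big_nil eqxx ba addr0.
  by rewrite mulNrn swap2.
move=> /and4P[Ua Ub Uc Ur] _ Hw.
have Ha : 0 < w a <= 3 by apply: Hw; rewrite !inE eqxx.
have Hb : 0 < w b <= 3 by apply: Hw; rewrite !inE eqxx orbT.
have Hc : 0 < w c <= 3 by apply: Hw; rewrite !inE eqxx !orbT.
have ba : (b == a) = false.
  by apply/negbTE; apply: contraNneq Ua => ->; rewrite mem_head.
have ca : (c == a) = false.
  by apply/negbTE; apply: contraNneq Ua => ->; rewrite !inE eqxx orbT.
have cb : (c == b) = false.
  by apply/negbTE; apply: contraNneq Ub => ->; rewrite mem_head.
case: rest Hn Ua Ub Uc Ur Hw => [|d rest] Hn Ua Ub Uc Ur Hw.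
  have [a1 [a2 [a3 [m1 m2 m3 E]]]] := triple Ha Hb Hc.
  exists (fun x => if x == a then a1 else if x == b then a2 else a3); split.
    by move=> x; case: (x == a) => //; case: (x == b).
  by rewrite !big_cons big_nil eqxx ba ca cb eqxx addr0 addrA.
have Hlt : size [:: c, d & rest] < n.
  by move: Hn; rewrite /= !ltnS; apply: leq_trans.
have Ur' : uniq [:: c, d & rest] by rewrite /= Uc.
have Hw' : forall x, x \in [:: c, d & rest] -> 0 < w x <= 3.
  by move=> x Hx; apply: Hw; rewrite inE; apply/orP; right; rewrite inE Hx orbT.
have [g' [Hg' E]] := IH _ Hlt Ur' isT Hw'.
exists (fun x => if x == a then (w b)%:Z else if x == b then - (w a)%:Z else g' x)%R; split.
  move=> x; rewrite inE => /orP[/eqP->|]; rewrite ?eqxx.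
    by case: (w b) Hb => [|[|[|[|]]]].
  rewrite inE => /orP[/eqP->|Hx]; rewrite ?eqxx ?ba.
    by case: (w a) Ha => [|[|[|[|]]]].
  have -> : (x == a) = false.
    by apply/negbTE; apply: contraNneq Ua => <-; rewrite inE Hx orbT.
  have -> : (x == b) = false.
    by apply/negbTE; apply: contraNneq Ub => <-.
  exact: Hg'.
rewrite big_cons eqxx big_cons ba eqxx.
rewrite (eq_big_seq (fun x => g' x *+ w x)%R); last first.
  move=> x Hx.
  have -> : (x == a) = false.
    by apply/negbTE; apply: contraNneq Ua => <-; rewrite inE Hx orbT.
  have -> : (x == b) = false.
    by apply/negbTE; apply: contraNneq Ub => <-.
  by [].
by rewrite E addr0 mulNrn swap2.
Qed.

Lemma card_bigcup_le (I U : finType) (P : {pred I}) (F : I -> {set U}) :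
  #|\bigcup_(i in P) F i| <= \sum_(i in P) #|F i|.
Proof.
elim/big_rec2: _ => [|i A n _ H]; first by rewrite cards0.
apply: leq_trans (leq_card_setU _ _) _; by rewrite leq_add2l.
Qed.

Lemma cyc_comm (T : finType) (s t u : {perm T}) :
  t \in <[s]>%g -> u \in <[s]>%g -> (t * u = u * t)%g.
Proof. by move=> Ht Hu; apply: (centsP (cycle_abelian s)). Qed.

Lemma toE (T : finType) (b : {set T}) (t : {perm T}) : ('P^*)%act b t = t @: b.
Proof. by rewrite /= /setact; apply: eq_imset => x. Qed.

Lemma cyc_block (T : finType) (B : {set {set T}}) (s : {perm T}) :
  is_automorphism B s -> forall t b, t \in <[s]>%g -> b \in B -> t @: b \in B.
Proof.
move=> Hs t b /cycleP[i ->]; elim: i b => [|i IH] b Hb.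
  rewrite expg0 (eq_imset (g := id)) ?imset_id // => x; exact: perm1.
rewrite expgSr (eq_imset (g := s \o (s ^+ i)%g)); last by move=> x; rewrite permM.
by rewrite imset_comp; apply: Hs; apply: IH.
Qed.

Lemma orb_bound (T : finType) (s : {perm T}) (x0 : T) (b0 : {set T})
  (R : {set {set T}}) :
  (forall y, exists2 t, t \in <[s]>%g & y = t x0) ->
  (forall c, c \in R -> x0 \in c) ->
  #|b0| = 3 ->
  #|orbit ('P^*)%act <[s]>%g b0 :&: R| <= 3.
Proof.
move=> trans HR Hb0.
pose psi p := (odflt 1%g [pick t in <[s]>%g | t p == x0]) @: b0.
rewrite -Hb0; apply: leq_trans (leq_imset_card psi b0).
apply: subset_leq_card; apply/subsetP => c; rewrite inE => /andP[/orbitP[t Ht <-] cR].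
have := HR _ cR; rewrite toE => /imsetP[p pb0 x0E].
apply/imsetP; exists p => //; rewrite /psi.
case: pickP => [u /andP[Hu /eqP up] | none]; last first.
  have := none t; rewrite Ht -x0E eqxx //.
suff -> : u = t by [].
apply/permP => y /=.
have [r Hr ->] := trans y.
have e1 : u (r x0) = (t * r * u)%g p by rewrite !permM -x0E.
have e2 : t (r x0) = (u * r * t)%g p by rewrite !permM up.
rewrite e1 e2; congr (fun (z : {perm T}) => z p).
by rewrite (cyc_comm Ht Hr) -mulgA (cyc_comm Ht Hu) mulgA (cyc_comm Hr Hu).
Qed.

Unset Implicit Arguments.

Theorem mainTheorem7 (T : finType) (B : {set {set T}}) :
  is_cyclic_STS B -> 7 < #|T| -> admits_zero_sum_flow B 4.
Proof.
move=> [[B3 Bpair] [s [Saut [x0 Hx0]]]] Hv.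
have porbT : porbit s x0 = [set: T].
  by apply/eqP; rewrite eqEcard subsetT cardsT Hx0 leqnn.
have trans : forall y, exists2 t, t \in <[s]>%g & y = t x0.
  move=> y; have : y \in porbit s x0 by rewrite porbT inE.
  by rewrite [@porbit]unlock => /imsetP[t Ht ->]; exists t.
have GB := cyc_block Saut.
have GBiff : forall t (b : {set T}), t \in <[s]>%g -> (t @: b \in B) = (b \in B).
  move=> t b Ht; apply/idP/idP => [H|]; last exact: GB.
  have -> : b = (t^-1)%g @: (t @: b).
    by rewrite -imset_comp (eq_imset (g := id)) ?imset_id // => x /=; rewrite permK.
  by apply: GB => //; rewrite groupV.
pose Orb b := orbit ('P^*)%act <[s]>%g b.
have OrbE : forall t (b : {set T}), t \in <[s]>%g -> Orb (t @: b) = Orb b.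
  by move=> t b Ht; rewrite /Orb -toE orbit_act.
pose R := [set b in B | x0 \in b].
pose h b := Orb b :&: R.
pose P := h @: R.
pose w C := #|[set b in R | h b == C]|.
have wP : forall C, C \in P -> 0 < w C <= 3.
  move=> C /imsetP[b0 Hb0 ->]; apply/andP; split.
    by apply/card_gt0P; exists b0; rewrite inE Hb0 eqxx.
  have HR : forall c, c \in R -> x0 \in c by move=> c; rewrite inE => /andP[].
  have Hb03 : #|b0| = 3 by move: Hb0; rewrite inE => /andP[/B3].
  apply: leq_trans (orb_bound trans HR Hb03).
  apply: subset_leq_card; apply/subsetP => b; rewrite inE => /andP[bR /eqP hb].
  change (b \in h b0); rewrite -hb.
  by rewrite /h inE bR andbT orbit_refl.
have R4 : 4 <= #|R|.
  have sub : [set: T] :\ x0 \subset \bigcup_(b in R) (b :\ x0).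
    apply/subsetP => y; rewrite !inE andbT => yx0.
    have c2 : #|[set x0; y]| = 2 by rewrite cards2 eq_sym yx0.
    have [b [[bB pb] _]] := Bpair _ c2.
    apply/bigcupP; exists b; first by rewrite inE bB; apply: (subsetP pb); rewrite !inE eqxx.
    by rewrite !inE yx0; apply: (subsetP pb); rewrite !inE eqxx orbT.
  have := leq_trans (subset_leq_card sub) (card_bigcup_le _ _).
  rewrite (eq_bigr (fun _ => 2)); last first.
    move=> b; rewrite inE => /andP[/B3 b3 xb].
    by move: b3; rewrite (cardsD1 x0) xb => -[].
  rewrite sum_nat_const.
  move: (cardsD1 x0 [set: T]); rewrite inE cardsT.
  move: Hv. lia.
have cardR : #|R| = \sum_(C in P) w C.
  rewrite (eq_bigr (fun C => \sum_(b in R | h b == C) 1)); last first.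
    by move=> C _; rewrite /w -sum1_card; apply: eq_bigl => b; rewrite inE.
  by rewrite -(partition_big_imset h) sum1_card.
have P2 : 1 < #|P|.
  have : #|R| <= \sum_(C in P) 3.
    by rewrite cardR; apply: leq_sum => C /wP /andP[].
  rewrite sum_nat_const; move: R4; lia.
have sz : 1 < size (enum P) by rewrite -cardE.
have wP' : forall C, C \in enum P -> 0 < w C <= 3.
  by move=> C; rewrite mem_enum; apply: wP.
have [g [Hg gsum]] := vals_exist (enum_uniq (mem P)) sz wP'.
pose f b := g (h b).
exists f; split.
  move=> b bB; apply: vals_ok; apply: Hg; rewrite mem_enum.
  have /card_gt0P [p pb] : 0 < #|b| by rewrite B3.
  have [t Ht pE] := trans p.
  have Hti : (t^-1)%g \in <[s]>%g by rewrite groupV.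
  apply/imsetP; exists ((t^-1)%g @: b).
    rewrite inE GB //=; apply/imsetP; exists p => //; by rewrite pE permK.
  by rewrite /h OrbE.
have sum0 : (\sum_(b in B | x0 \in b) f b = 0)%R.
  rewrite (eq_bigl (fun b => b \in R)); last by move=> b; rewrite inE.
  rewrite (partition_big_imset h) /= -big_enum /=.
  rewrite -[RHS]gsum.
  apply: eq_bigr => C _.
  rewrite (eq_bigr (fun _ => g C)); last by move=> b /andP[_ /eqP <-].
  rewrite (eq_bigl (fun b => b \in [set b in R | h b == C])); last by move=> b; rewrite inE.
  by rewrite sumr_const.
move=> x; have [t Ht ->] := trans x; rewrite -[RHS]sum0.
rewrite (reindex_inj (imset_inj (@perm_inj _ t))) /=.
apply: eq_big => [b|b _]; first by rewrite GBiff // mem_imset //; exact: perm_inj.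
by rewrite /f /h OrbE.
Qed.
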